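(* Let $0<\beta<1$. Then the linear operator $T=\beta+2xD+(x^2-1)D^2$ on $\mathbb{R}[x]$, i.e. $T[f](x)=\beta f(x)+2xf'(x)+(x^2-1)f''(x)$, preserves the reality of zeros: whenever $f\in\mathbb{R}[x]$ has only real zeros, $T[f]$ has only real zeros.
   Context: $D$ denotes differentiation with respect to $x$. *)

(* Defs.v *)
From mathcomp Require Import all_boot all_algebra.
From mathcomp Require Import complex.
From mathcomp Require Import reals.
Set Implicit Arguments. Unset Strict Implicit. Unset Printing Implicit Defensive.
Import GRing.Theory Num.Theory.
Local Open Scope ring_scope.

Definition only_real_zeros (R : realType) (f : {poly R}) : Prop :=
  forall z : R[i], root (map_poly (real_complex R) f) z -> complex.Im z = 0.

Definition Top (R : realType) (beta : R) (f : {poly R}) : {poly R} :=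
  beta *: f + (2%:R *: 'X) * f^`() + ('X ^+ 2 - 1) * f^`(2).

(* Main.v *)
Require Import Defs.
From mathcomp Require Import all_boot all_algebra.
From mathcomp Require Import complex.
From mathcomp Require Import reals.
From mathcomp Require Import ring lra.
Import GRing.Theory Num.Theory.
Import order.Order.TTheory.
Local Open Scope ring_scope.
Section S.
Variable R : realType.
Implicit Types x y : R[i].
Lemma ReD x y : complex.Re (x + y) = complex.Re x + complex.Re y.
Proof. by case: x => a b; case: y => c d. Qed.
Lemma ImD x y : complex.Im (x + y) = complex.Im x + complex.Im y.
Proof. by case: x => a b; case: y => c d. Qed.
Lemma ReN x : complex.Re (- x) = - complex.Re x.
Proof. by case: x => a b. Qed.
Lemma ImN x : complex.Im (- x) = - complex.Im x.
Proof. by case: x => a b. Qed.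
Lemma ReM x y : complex.Re (x * y) = complex.Re x * complex.Re y - complex.Im x * complex.Im y.
Proof. by case: x => a b; case: y => c d. Qed.
Lemma ImM x y : complex.Im (x * y) = complex.Re x * complex.Im y + complex.Im x * complex.Re y.
Proof. by case: x => a b; case: y => c d. Qed.
Lemma ReB x y : complex.Re (x - y) = complex.Re x - complex.Re y.
Proof. by rewrite ReD ReN. Qed.
Lemma ImB x y : complex.Im (x - y) = complex.Im x - complex.Im y.
Proof. by rewrite ImD ImN. Qed.
Lemma ReC (r : R) : complex.Re (real_complex R r) = r. Proof. by []. Qed.
Lemma ImC (r : R) : complex.Im (real_complex R r) = 0. Proof. by []. Qed.
Lemma Re1 : complex.Re (1 : R[i]) = 1. Proof. by []. Qed.
Lemma Im1 : complex.Im (1 : R[i]) = 0. Proof. by []. Qed.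
Lemma Re0 : complex.Re (0 : R[i]) = 0. Proof. by []. Qed.
Lemma Im0 : complex.Im (0 : R[i]) = 0. Proof. by []. Qed.
Lemma complex_eq0 x : (x == 0) = (complex.Re x == 0) && (complex.Im x == 0).
Proof. by case: x => a b; rewrite eq_complex. Qed.
Definition stab (g : {poly R[i]}) := forall w : R[i], 0 < complex.Im w -> ~~ root g w.
Definition J (a b : R[i]) := complex.Im a * complex.Re b - complex.Re a * complex.Im b.

Lemma stab_neq0 {g} : stab g -> g != 0.
Proof.
move=> sg; apply/negP => /eqP g0; have := sg (Complex 0 1) ltr01.
by rewrite g0 /root horner0 eqxx.
Qed.

Lemma nz_sq x : x != 0 -> 0 < complex.Re x ^+ 2 + complex.Im x ^+ 2.
Proof.
rewrite complex_eq0 negb_and => /orP[] h.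
  by apply: ltr_pwDl; rewrite ?sqr_ge0 // exprn_even_gt0 // h orbT.
by apply: ltr_pwDr; rewrite ?sqr_ge0 // exprn_even_gt0 // h orbT.
Qed.

Lemma stab_J n : forall g : {poly R[i]}, (size g <= n)%N -> stab g -> forall w, 0 < complex.Im w ->
  J (g^`().[w]) (g.[w]) <= 0 /\ ((1 < size g)%N -> J (g^`().[w]) (g.[w]) < 0).
Proof.
elim: n => [|n IH] g hs sg w hw.
  by move: hs; rewrite leqn0 size_poly_eq0 (negbTE (stab_neq0 sg)).
have [hs1|hs1] := leqP (size g) 1.
  rewrite (size1_polyC hs1) derivC horner0 /J Im0 Re0 !mul0r subrr.
  by split=> // /(leq_trans hs1); rewrite ltnn.
have /closed_rootP [rho hrho] : size g != 1%N by rewrite gtn_eqF.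
have /factor_theorem [h gE] := hrho.
have hnz : h != 0 by apply: contra (stab_neq0 sg); rewrite gE => /eqP ->; rewrite mul0r.
have szh : size g = (size h).+1.
  by rewrite gE size_mul ?polyXsubC_eq0 // size_XsubC addn2.
have sh : stab h.
  move=> u hu; apply: contra (sg u hu); rewrite gE /root hornerM => /eqP ->.
  by rewrite mul0r.
have hsh : (size h <= n)%N by rewrite -ltnS -szh.
have [Jh _] := IH h hsh sh w hw.
have hrho' : complex.Im rho <= 0.
  by rewrite leNgt; apply/negP => /sg; rewrite hrho.
have Hnz : h.[w] != 0.
  by have := sh w hw; rewrite /root.
have := nz_sq _ Hnz.
have ->: g^`().[w] = h^`().[w] * (w - rho) + h.[w].
  by rewrite gE derivM derivXsubC mulr1 hornerD hornerM hornerXsubC.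
have ->: g.[w] = h.[w] * (w - rho) by rewrite gE hornerM hornerXsubC.
move: Jh; rewrite /J.
rewrite !(ReD, ImD, ReM, ImM, ReB, ImB, ReN, ImN).
move: (h^`().[w]) (h.[w]) => A B.
move: (complex.Re A) (complex.Im A) (complex.Re B) (complex.Im B) => a1 a2 b1 b2.
move: (complex.Re w) (complex.Im w) hw (complex.Re rho) (complex.Im rho) hrho' => x y hy r1 r2 hr2.
move=> hJ hB.
set D := (x - r1) ^+ 2 + (y - r2) ^+ 2.
have hD : 0 <= D by rewrite addr_ge0 // sqr_ge0.
have E : (a2 * (x - r1) + a1 * (y - r2) + b2) * (b1 * (x - r1) - b2 * (y - r2)) -
  (a1 * (x - r1) - a2 * (y - r2) + b1) * (b1 * (y - r2) + b2 * (x - r1)) =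
  D * (a2 * b1 - a1 * b2) - (b1 ^+ 2 + b2 ^+ 2) * (y - r2) by rewrite /D; ring.
have hyr : 0 < y - r2 by lra.
have h1 : D * (a2 * b1 - a1 * b2) <= 0 by rewrite mulr_ge0_le0.
have h2 : 0 < (b1 ^+ 2 + b2 ^+ 2) * (y - r2) by rewrite mulr_gt0.
by split; [|move=> _]; lra.
Qed.
Lemma stab_step g v : stab g -> 0 <= complex.Im v -> v != 0 -> stab (g^`() - v *: g).
Proof.
move=> sg hv vnz w hw; apply/negP; rewrite /root hornerD hornerN hornerZ subr_eq0 => /eqP E.
have [_ J2] := @stab_J (size g) g (leqnn _) sg w hw.
have Gnz : g.[w] != 0 by have := sg w hw; rewrite /root.
have [hs|hs] := leqP (size g) 1.
  have d0 : g^`() = 0 by rewrite (size1_polyC hs) derivC.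
  move: E; rewrite d0 horner0 => /esym/eqP; rewrite mulf_eq0 (negbTE vnz) (negbTE Gnz).
  by [].
have := J2 hs; rewrite E /J ReM ImM.
have := nz_sq _ Gnz.
move: (complex.Re g.[w]) (complex.Im g.[w]) => b1 b2 hb.
have -> : (complex.Re v * b2 + complex.Im v * b1) * b1 - (complex.Re v * b1 - complex.Im v * b2) * b2
  = complex.Im v * (b1 ^+ 2 + b2 ^+ 2) by ring.
by rewrite ltNge mulr_ge0 // ltW.
Qed.
Lemma Re_nat k : complex.Re (k%:R : R[i]) = k%:R.
Proof. by rewrite -(rmorph_nat (real_complex R)). Qed.
Lemma Im_nat k : complex.Im (k%:R : R[i]) = 0.
Proof. by rewrite -(rmorph_nat (real_complex R)). Qed.

Lemma root_Im (b : R) (c v : R[i]) : 0 < b -> b < 1 -> 0 < complex.Im c ->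
  (c ^+ 2 - 1) * v ^+ 2 + 2%:R * c * v + real_complex R b = 0 -> 0 <= complex.Im v.
Proof.
move=> b0 b1 hc E.
have vnz : v != 0.
  apply/negP => /eqP v0; move: E; rewrite v0 !(expr0n, mulr0, add0r) /=.
  by move=> [] /eqP; rewrite gt_eqF.
set t := v^-1.
have ht : real_complex R b * t ^+ 2 + 2%:R * c * t + (c ^+ 2 - 1) = 0.
  rewrite -[RHS](mul0r (t ^+ 2)) -E /t; field; exact: vnz.
have vE : v = t^-1 by rewrite /t invrK.
rewrite vE; clear E vE.
move: ht; case: (t) => m n; case: c hc => x y /= hy.
move=> ht.
have := congr1 (@complex.Re R) ht; have := congr1 (@complex.Im R) ht.
rewrite !expr2 !(ReD, ImD, ReM, ImM, ReB, ImB, ReN, ImN, Re_nat, Im_nat) /= => eI eR.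
have hn : n <= 0.
  rewrite leNgt; apply/negP => hn.
  set p := b * m + x; set q := b * n + y.
  have e1 : p ^+ 2 - q ^+ 2 = (1 - b) * (x ^+ 2 - y ^+ 2) + b by rewrite /p /q; nra.
  have e2 : p * q = (1 - b) * x * y by rewrite /p /q; nra.
  have hq : y < q by rewrite /q; nra.
  have hq2 : y ^+ 2 < q ^+ 2 by nra.
  have e3 : p ^+ 2 * q ^+ 2 <= (1 - b) ^+ 2 * x ^+ 2 * q ^+ 2.
    have -> : p ^+ 2 * q ^+ 2 = ((1 - b) * x) ^+ 2 * y ^+ 2 by rewrite -exprMn e2; ring.
    have := sqr_ge0 ((1 - b) * x); nra.
  have e4 : p ^+ 2 <= (1 - b) ^+ 2 * x ^+ 2.
    by rewrite -(ler_pM2r (_ : 0 < q ^+ 2)) //; nra.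
  nra.
rewrite oppr_ge0 mulr_le0_ge0 // invr_ge0; nra.
Qed.
Lemma main_pos (b : R) (f : {poly R}) (c : R[i]) : 0 < b -> b < 1 -> only_real_zeros f ->
  0 < complex.Im c -> ~~ root (map_poly (real_complex R) (Top b f)) c.
Proof.
move=> b0 b1 hf hc.
set F := map_poly (real_complex R) f.
have sF : stab F.
  move=> w hw; apply/negP => /hf hw0; by move: hw; rewrite hw0 ltxx.
set A := c ^+ 2 - 1.
have Anz : A != 0.
  rewrite /A complex_eq0; move: hc; case: (c) => x y hy.
  rewrite !expr2 !(ReD, ImD, ReM, ImM, ReB, ImB, ReN, ImN) /=.
  apply/negP => /andP [/eqP e1 /eqP e2]; move: e1 e2 hy => e1 e2 /= hy.
  have x0 : x = 0 by nra.
  rewrite x0 in e1; nra.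
set s := sqrtC (c ^+ 2 - A * real_complex R b).
have hs : s ^+ 2 = c ^+ 2 - A * real_complex R b by rewrite sqrtCK.
set v1 := (- c + s) / A.
set v2 := (- c - s) / A.
have ev1 : A * v1 ^+ 2 + 2%:R * c * v1 + real_complex R b = 0.
  have -> : A * v1 ^+ 2 + 2%:R * c * v1 + real_complex R b =
    (s ^+ 2 - (c ^+ 2 - A * real_complex R b)) / A by rewrite /v1; field.
  by rewrite hs subrr mul0r.
have ev2 : A * v2 ^+ 2 + 2%:R * c * v2 + real_complex R b = 0.
  have -> : A * v2 ^+ 2 + 2%:R * c * v2 + real_complex R b =
    (s ^+ 2 - (c ^+ 2 - A * real_complex R b)) / A by rewrite /v2; field.
  by rewrite hs subrr mul0r.
have bnz : real_complex R b != 0.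
  by rewrite complex_eq0 /= eqxx andbT gt_eqF.
have v1nz : v1 != 0.
  by apply/negP => /eqP v0; move: ev1; rewrite v0 expr0n /= !(mulr0, add0r) => /eqP; rewrite (negbTE bnz).
have v2nz : v2 != 0.
  by apply/negP => /eqP v0; move: ev2; rewrite v0 expr0n /= !(mulr0, add0r) => /eqP; rewrite (negbTE bnz).
have iv1 : 0 <= complex.Im v1 by exact: (@root_Im b c _ b0 b1 hc ev1).
have iv2 : 0 <= complex.Im v2 by exact: (@root_Im b c _ b0 b1 hc ev2).
set G := F^`() - v2 *: F.
have sG : stab G by apply: stab_step.
set H := G^`() - v1 *: G.
have sH : stab H by apply: stab_step.
have hS : A * (v1 + v2) = - (2%:R * c) by rewrite /v1 /v2; field.
have hP : A * (v1 * v2) = real_complex R b.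
  have -> : A * (v1 * v2) = (c ^+ 2 - s ^+ 2) / A by rewrite /v1 /v2; field.
  by rewrite hs; field.
have E : (map_poly (real_complex R) (Top b f)).[c] = A * H.[c].
  rewrite /Top !rmorphD /= !map_polyZ /= rmorphM /= map_polyZ /= map_polyX.
  rewrite rmorphM /= rmorphB /= rmorphXn /= map_polyX rmorph1 -!deriv_map -/F.
  rewrite (rmorph_nat (real_complex R) 2).
  rewrite /H /G !derivB !derivZ.
  rewrite !(hornerD, hornerN, hornerZ, hornerM, hornerX, hornerC, hornerXn).
  move: (F.[c]) (F^`().[c]) (F^`()^`().[c]) => P0 P1 P2.
  have -> : A * (P2 - v2 * P1 - v1 * (P1 - v2 * P0)) =
    A * P2 - (A * (v1 + v2)) * P1 + (A * (v1 * v2)) * P0 by ring.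
  rewrite hS hP /A; ring.
apply/negP; rewrite /root E mulf_eq0 (negbTE Anz) /=.
move=> /eqP H0; by move: (sH c hc); rewrite /root H0 eqxx.
Qed.

Lemma conj_Top (b : R) (f : {poly R}) (z : R[i]) :
  root (map_poly (real_complex R) (Top b f)) z ->
  root (map_poly (real_complex R) (Top b f)) (conjc z).
Proof.
set P := map_poly _ _.
have hP : map_poly conjc P = P.
  rewrite /P -map_poly_comp; apply: eq_map_poly => r /=; exact: conjc_real.
by rewrite -complex_root_conj hP.
Qed.

End S.

Theorem proposition4p8 (R : realType) (beta : R) :
  0 < beta -> beta < 1 ->
  forall f : {poly R}, only_real_zeros f -> only_real_zeros (Top beta f).
Proof.
move=> b0 b1 f hf z hz.
have [h|h|h] := ltrgtP (complex.Im z) 0; last by [].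
  have hc : 0 < complex.Im (conjc z).
    by move: h; case: (z) => a b /= h; rewrite oppr_gt0.
  have := @main_pos R beta f _ b0 b1 hf hc.
  by rewrite (@conj_Top R beta f z hz).
by have := @main_pos R beta f _ b0 b1 hf h; rewrite hz.
Qed.
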